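(* Let $(\hat\tau_n)_{n\in\mathbb N}$ be $\mathbb G$-stopping times with $\lim_{n\to\infty}\hat\tau_n=\infty$, and let $(\tau_n)_{n\ge1}$ be $\mathbb F$-stopping times with $\hat\tau_n\wedge\vartheta=\tau_n\wedge\vartheta$ for all $n$. Then $\tau:=\lim_{n\to\infty}\tau_n$ satisfies $\tau\ge\nu:=\inf\{t\in\mathbb R_+:G_t=0\}$.
   Context: Let $(\Omega,\mathcal G,\mathbb P)$ be a probability space with a filtration $\mathbb F$ satisfying the usual conditions, $\vartheta$ a strictly positive finite random time, $\mathbb G$ the progressive enlargement of $\mathbb F$ by $\vartheta$ (smallest right-continuous filtration containing $\mathbb F$ making $\vartheta$ a stopping time), and $G_t=\mathbb P(\vartheta>t|\mathcal F_t)$ (càdlàg version). *)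

(* Defs.v *)
From HB Require Import structures.
From mathcomp Require Import all_boot all_order all_algebra.
From mathcomp Require Import all_classical all_reals all_analysis.
Set Implicit Arguments. Unset Strict Implicit. Unset Printing Implicit Defensive.
Import Order.TTheory GRing.Theory Num.Theory.
Import numFieldNormedType.Exports.
Local Open Scope classical_set_scope.
Local Open Scope ring_scope.

Section Defs.
Context {R : realType} {d : measure_display} {T : measurableType d}.
Variable P : probability T R.

(* A filtration indexed by R_+ = [0, +oo) (values at t < 0 are irrelevant):
   an increasing family of sub-sigma-algebras of the ambient sigma-algebra. *)
Definition filtration (F : R -> set_system T) : Prop :=
  [/\ (forall t, 0 <= t -> sigma_algebra setT (F t)),
      (forall t, 0 <= t -> F t `<=` measurable) &
      (forall s t, 0 <= s -> s <= t -> F s `<=` F t)].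

Definition right_continuous_filtration (F : R -> set_system T) : Prop :=
  filtration F /\
  (forall t, 0 <= t -> forall A, (forall s, t < s -> F s A) -> F t A).

Definition usual_conditions (F : R -> set_system T) : Prop :=
  right_continuous_filtration F /\
  (forall N, measurable N -> P N = 0%E -> F 0 N).

Definition stopping_time (F : R -> set_system T) (tau : T -> \bar R) : Prop :=
  (forall w, (0 <= tau w)%E) /\
  (forall t, 0 <= t -> F t [set w | (tau w <= t%:E)%E]).

(* progressive enlargement of F by theta: the smallest right-continuous
   filtration containing F and making theta a stopping time *)
Definition prog_enlargement (F : R -> set_system T) (theta : T -> R) :
    R -> set_system T :=
  fun t A => forall H : R -> set_system T,
    right_continuous_filtration H ->
    (forall s, 0 <= s -> F s `<=` H s) ->
    stopping_time H (fun w => (theta w)%:E) ->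
    H t A.

Definition cond_prob_version (Ft : set_system T) (B : set T) (Y : T -> R) : Prop :=
  (forall U, measurable U -> Ft (Y @^-1` U)) /\
  P.-integrable setT (EFin \o Y) /\
  (forall A, Ft A -> (\int[P]_(w in A) (Y w)%:E)%E = P (A `&` B)).

Definition cadlag (X : R -> T -> R) : Prop :=
  forall w, (forall t, 0 <= t -> X s w @[s --> t^'+] --> X t w) /\
            (forall t, 0 < t -> cvg (X s w @[s --> t^'-])).

Definition azema_supermartingale (F : R -> set_system T) (theta : T -> R)
    (G : R -> T -> R) : Prop :=
  cadlag G /\
  forall t, 0 <= t -> cond_prob_version (F t) [set w | t < theta w] (G t).

(* nu = inf {t in R_+ : G_t = 0}, with inf emptyset = +oo *)
Definition first_zero (G : R -> T -> R) (w : T) : \bar R :=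
  ereal_inf [set t%:E | t in [set t : R | 0 <= t /\ G t w = 0]].

End Defs.

(* Main.v *)
Require Import Defs.
From HB Require Import structures.
From mathcomp Require Import all_boot all_order all_algebra.
From mathcomp Require Import all_classical all_reals all_analysis.
From mathcomp Require Import measurable_realfun.
From mathcomp Require Import ring lra.
Import Order.TTheory GRing.Theory Num.Theory.
Import numFieldNormedType.Exports.
Local Open Scope classical_set_scope.
Local Open Scope ring_scope.
Section SA.
Context {T : Type} (S : set (set T)) (hS : sigma_algebra setT S).

Lemma sa_C A : S A -> S (~` A).
Proof. by case: hS => _ hC _ /hC; rewrite setTD. Qed.

Lemma sa_U A B : S A -> S B -> S (A `|` B).
Proof.
case: hS => h0 _ hU hA hB.
have := hU (fun n => if n is 0%N then A else if n is 1%N then B else set0).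
rewrite (_ : \bigcup_k _ = A `|` B); first by apply => -[|[|]].
apply/seteqP; split => x.
  by case=> -[|[|]] _ //= Hx; [left|right].
by case=> Hx; [exists 0%N|exists 1%N].
Qed.

Lemma sa_I A B : S A -> S B -> S (A `&` B).
Proof.
move=> hA hB; rewrite -[A `&` B]setCK setCI; apply: sa_C; apply: sa_U; exact: sa_C.
Qed.

Lemma sa_bigcap (A : (set T)^nat) : (forall n, S (A n)) -> S (\bigcap_n A n).
Proof.
move=> hA; rewrite -[X in S X]setCK setC_bigcap; apply: sa_C.
case: hS => _ _ hU; apply: hU => n; exact: sa_C.
Qed.
End SA.
Lemma key (R : realType) (d : measure_display) (T : measurableType d)
  (P : probability T R) (F : R -> set_system T) (theta : T -> R)
  (G : R -> T -> R) (taun : nat -> T -> \bar R) (t : R) (m : nat) :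
  0 <= t ->
  sigma_algebra setT (F t) -> F t `<=` measurable ->
  cond_prob_version P (F t) [set w | t < theta w] (G t) ->
  (forall n, F t [set w | (taun n w <= t%:E)%E]) ->
  (forall w m, exists n, (m <= n)%N /\ ((theta w)%:E <= taun n w)%E) ->
  {ae P, forall w, (forall n, (m <= n)%N -> (taun n w <= t%:E)%E) -> G t w = 0}.
Proof.
move=> t0 hsa hFm [hpre [hint hcond]] hst hth.
set B := [set w | forall n, (m <= n)%N -> (taun n w <= t%:E)%E].
have FB : F t B.
  rewrite (_ : B = \bigcap_n [set w | (taun (n + m)%N w <= t%:E)%E]).
    by apply: sa_bigcap => // n; exact: hst.
  apply/seteqP; split => w /= Hw.
    by move=> n _; apply: Hw; rewrite leq_addl.
  by move=> n mn; have := Hw (n - m)%N I; rewrite subnK.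
have mG : measurable_fun setT (G t).
  by move=> _ Y mY; rewrite setTI; apply: hFm; exact: hpre.
have mGE : measurable_fun [set: T] ((EFin \o G t) : T -> \bar R) by apply/measurable_EFinP.
have Bth : B `&` [set w | t < theta w] = set0.
  apply/seteqP; split => // w [Bw tw].
  have [n [mn thn]] := hth w m.
  have := le_trans thn (Bw n mn); rewrite lee_fin => /(lt_le_trans tw).
  by rewrite ltxx.
set D1 := B `&` (G t @^-1` `]0%R, +oo[).
set D2 := B `&` (G t @^-1` `]-oo, 0%R[).
have FD1 : F t D1 by apply: sa_I => //; apply: hpre.
have FD2 : F t D2 by apply: sa_I => //; apply: hpre.
have P0 D : D `<=` B -> P (D `&` [set w | t < theta w]) = 0%E.
  move=> DB; rewrite (_ : _ `&` _ = set0) ?measure0//.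
  by apply/seteqP; split => // w [/DB Bw tw]; rewrite -Bth.
have ae1 : {ae P, forall w, D1 w -> (G t w)%:E = 0%E}.
  apply/(ae_eq_integral_abs P (hFm _ FD1)).
    exact: measurable_funS mGE.
  rewrite (eq_integral (fun w => (G t w)%:E)); last first.
    move=> w; rewrite inE => -[_ /=]; rewrite in_itv /= andbT => Gw.
    by rewrite gtr0_norm.
  by rewrite hcond // P0 // => w [].
have ae2 : {ae P, forall w, D2 w -> (G t w)%:E = 0%E}.
  apply/(ae_eq_integral_abs P (hFm _ FD2)).
    exact: measurable_funS mGE.
  rewrite (eq_integral (fun w => (- (G t w))%:E)); last first.
    move=> w; rewrite inE => -[_ /=]; rewrite in_itv /= => Gw.
    by rewrite ltr0_norm.
  have := @integral_ge0N _ _ _ P D2 (fun w => (- (G t w))%:E).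
  rewrite (eq_integral (fun w => (G t w)%:E)); last first.
    by move=> w _; rewrite EFinN oppeK.
  rewrite hcond // P0; last by move=> w [].
  move=> h; rewrite -[LHS]oppeK -h ?oppe0 //.
  move=> w [_ /=]; rewrite in_itv /= => Gw.
  by rewrite lee_fin oppr_ge0 ltW.
apply: filterS2 ae1 ae2 => w h1 h2 Bw.
have [Gw|Gw|//] := ltrgtP (G t w) 0.
- have /h2 : D2 w by split => //=; rewrite in_itv.
  by case.
- have /h1 : D1 w by split => //=; rewrite in_itv /= andbT.
  by case.
Qed.
Theorem lemma2p6 (R : realType) (d : measure_display) (T : measurableType d)
  (P : probability T R) (F : R -> set_system T) (theta : T -> R)
  (G : R -> T -> R)
  (tauh : nat -> T -> \bar R) (taun : nat -> T -> \bar R) (tau : T -> \bar R) :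
  usual_conditions P F ->
  measurable_fun setT theta ->
  (forall w, 0 < theta w) ->
  azema_supermartingale P F theta G ->
  (forall n, stopping_time (prog_enlargement F theta) (tauh n)) ->
  (forall w, tauh n w @[n --> \oo] --> +oo%E) ->
  (forall n, stopping_time F (taun n)) ->
  (forall n w, Order.min (tauh n w) (theta w)%:E = Order.min (taun n w) (theta w)%:E) ->
  (forall w, taun n w @[n --> \oo] --> tau w) ->
  {ae P, forall w, (first_zero G w <= tau w)%E}.
Proof.
move=> [[[hsa hFm _] _] _] _ _ [hcad hcp] _ htauh hstn hmin htau.
have hth : forall w m, exists n, (m <= n)%N /\ ((theta w)%:E <= taun n w)%E.
  move=> w m; have /cvgeyPgt /(_ (theta w)) [N _ HN] := htauh w.
  exists (maxn m N); split; first by rewrite leq_maxl.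
  have hlt := HN (maxn m N) (leq_maxr _ _).
  have := hmin (maxn m N) w; rewrite (min_r (ltW hlt)).
  have [//|h] := leP (theta w)%:E (taun (maxn m N) w).
  by rewrite ?(min_l (ltW h)) => E; rewrite E ltxx in h.
have hae : {ae P, forall w, forall j k m,
   (forall n, (m <= n)%N -> (taun n w <= (k%:R / j.+1%:R)%:E)%E) ->
   G (k%:R / j.+1%:R) w = 0}.
  apply: ae_foralln => j; apply: ae_foralln => k; apply: ae_foralln => m.
  have t0 : 0 <= k%:R / j.+1%:R :> R by rewrite divr_ge0.
  apply: key => //; [exact: hsa|exact: hFm|exact: hcp|].
  by move=> n; exact: (hstn n).2.
apply: filterS hae => w Hw.
have tau0 : (0 <= tau w)%E.
  rewrite leNgt; apply/negP => h.
  have [N _ HN] := htau w _ (open_ereal_lt' h).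
  have := HN N (leqnn N); rewrite /= ltNge => /negP; apply.
  exact: (hstn N).1.
case E: (tau w) => [r| |]; last by rewrite E in tau0.
  2: by rewrite leey.
have r0 : 0 <= r by rewrite E lee_fin in tau0.
suff Gr : G r w = 0.
  by apply: ge_ereal_inf; exists r%:E => //; exists r.
apply/eqP; apply/negPn/negP => Gne.
have e0 : 0 < `|G r w| by rewrite normr_gt0.
have := (hcad w).1 r r0; move/cvgrPdist_lt => /(_ _ e0).
move=> /nbhs_ballP[δ δ0 Hδ].
set j := Num.trunc δ^-1.
set k := (Num.trunc (r * j.+1%:R)).+1.
set J := j.+1%:R : R.
set t := k%:R / J.
have J0 : 0 < J by rewrite /J ltr0n.
have tJ : t * J = k%:R by rewrite /t mulfVK // gt_eqF.
have hk1 : r * J < k%:R by rewrite /k truncnS_gt.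
have hk2 : k%:R <= r * J + 1.
  rewrite /k -addn1 natrD lerD2r truncn_le.
  by rewrite mulr_ge0 // ltW.
have hdJ : 1 < δ * J.
  have : δ^-1 < J by rewrite /J /j truncnS_gt.
  by rewrite -(ltr_pM2l δ0) mulfV ?gt_eqF.
have rt : r < t by nra.
have tr : t - r < δ by nra.
have tlt : (tau w < t%:E)%E by rewrite E lte_fin.
have [N _ HN] := htau w _ (open_ereal_lt' tlt).
have Gt : G t w = 0.
  apply: (Hw j k N) => n Nn; exact: ltW (HN n Nn).
have h1 : `|r - t| < δ by rewrite distrC ger0_norm ?subr_ge0 ?ltW.
by have := Hδ t; rewrite /ball /= Gt subr0 ltxx => /(_ h1 rt).
Qed.
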